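(* Let $f:[0,1]\to\mathbb{R}^{+}$ be a decreasing function with continuous first and second derivatives. Let $a,b>0$ and define $t(x)=1-a(1-x)\dfrac{f(x)}{f(x)+b}$. If $f''(x)\bigl(f(x)+b\bigr)\ge 2\bigl(f'(x)\bigr)^2$ for all $x$, then $t$ is concave. *)

(* Defs.v *)
From Stdlib Require Import Reals Lra.
Open Scope R_scope.

Definition I01 (x : R) : Prop := 0 <= x <= 1.

(* g' is the derivative of g at x relative to the domain D (one-sided at
   boundary points of D, as for a function defined only on [0,1]). *)
Definition has_deriv_within (D : R -> Prop) (g g' : R -> R) (x : R) : Prop :=
  forall eps : R, 0 < eps -> exists delta : R, 0 < delta /\
    forall y : R, D y -> y <> x -> Rabs (y - x) < delta ->
      Rabs ((g y - g x) / (y - x) - g' x) < eps.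

Definition continuous_within (D : R -> Prop) (g : R -> R) (x : R) : Prop :=
  forall eps : R, 0 < eps -> exists delta : R, 0 < delta /\
    forall y : R, D y -> Rabs (y - x) < delta -> Rabs (g y - g x) < eps.

Definition concave_on (D : R -> Prop) (g : R -> R) : Prop :=
  forall x y l : R, D x -> D y -> 0 <= l <= 1 ->
    l * g x + (1 - l) * g y <= g (l * x + (1 - l) * y).

(* Main.v *)
Require Import Defs.
From Stdlib Require Import Reals Lra Psatz.
From Coquelicot Require Import Coquelicot.
Open Scope R_scope.

Lemma deriv_int g g' x : has_deriv_within I01 g g' x -> 0 < x < 1 ->
  derivable_pt_lim g x (g' x).
Proof.
  intros H Hx eps Heps.
  destruct (H eps Heps) as [d [Hd Hy]].
  assert (Hm : 0 < Rmin d (Rmin x (1 - x))).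
  { apply Rmin_glb_lt; [lra|apply Rmin_glb_lt; lra]. }
  exists (mkposreal _ Hm). intros h Hh Hha. simpl in Hha.
  assert (h1 := Rmin_l d (Rmin x (1-x))).
  assert (h2 := Rmin_r d (Rmin x (1-x))).
  assert (h3 := Rmin_l x (1-x)).
  assert (h4 := Rmin_r x (1-x)).
  assert (Ha := Rabs_def2 _ _ Hha).
  specialize (Hy (x + h)).
  replace (x + h - x) with h in Hy by ring.
  apply Hy.
  - unfold I01; lra.
  - intro E; apply Hh; lra.
  - lra.
Qed.

Lemma cont_of_deriv D g g' x : has_deriv_within D g g' x -> D x ->
  continuous_within D g x.
Proof.
  intros H Dx eps Heps.
  destruct (H 1 Rlt_0_1) as [d [Hd Hy]].
  set (M := Rabs (g' x) + 1).
  assert (HM : 0 < M) by (unfold M; pose proof (Rabs_pos (g' x)); lra).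
  assert (Hm : 0 < Rmin d (eps / M)).
  { apply Rmin_glb_lt; [lra|]. apply Rdiv_lt_0_compat; lra. }
  exists (Rmin d (eps / M)). split; [exact Hm|].
  intros y Dy Hyx.
  assert (h1 := Rmin_l d (eps/M)). assert (h2 := Rmin_r d (eps/M)).
  destruct (Req_dec y x) as [E|E].
  { subst. replace (g x - g x) with 0 by ring. rewrite Rabs_R0. lra. }
  specialize (Hy y Dy E ltac:(lra)).
  assert (Hyx0 : 0 < Rabs (y - x)) by (apply Rabs_pos_lt; lra).
  assert (Hq : Rabs ((g y - g x) / (y - x)) < M).
  { unfold M.
    replace ((g y - g x) / (y - x)) with (((g y - g x) / (y - x) - g' x) + g' x) by ring.
    pose proof (Rabs_triang ((g y - g x) / (y - x) - g' x) (g' x)). lra. }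
  replace (g y - g x) with ((g y - g x) / (y - x) * (y - x)) by (field; lra).
  rewrite Rabs_mult.
  assert (Rabs (y - x) < eps / M) by lra.
  assert (eps / M * M = eps) by (field; lra).
  pose proof (Rabs_pos ((g y - g x) / (y - x))).
  nra.
Qed.

Lemma cw_lim D g x : continuous_within D g x -> limit1_in g D (g x) x.
Proof.
  intros H eps Heps. destruct (H eps Heps) as [d [Hd Hy]].
  exists d. split; [lra|]. intros y [Dy Hdy]. simpl in *. unfold Rdist in *.
  apply Hy; auto.
Qed.

Lemma lim_cw D g x : limit1_in g D (g x) x -> continuous_within D g x.
Proof.
  intros H eps Heps. destruct (H eps Heps) as [d [Hd Hy]].
  exists d. split; [lra|]. intros y Dy Hdy.
  specialize (Hy y (conj Dy Hdy)). simpl in *. unfold Rdist in *. exact Hy.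
Qed.

Lemma lim_id D x : limit1_in (fun y => y) D x x.
Proof.
  intros eps Heps. exists eps. split; [lra|]. intros y [_ H]. exact H.
Qed.

Lemma T_cont f f1 a b x : (forall y, I01 y -> 0 < f y) -> 0 < b ->
  has_deriv_within I01 f f1 x -> I01 x ->
  continuous_within I01 (fun x => 1 - a * (1 - x) * (f x / (f x + b))) x.
Proof.
  intros Hp Hb Hd Hx. apply lim_cw.
  pose proof (cw_lim _ _ _ (cont_of_deriv _ _ _ _ Hd Hx)) as Lf.
  assert (L1 : limit1_in (fun y => f y + b) I01 (f x + b) x).
  { apply limit_plus; [exact Lf| exact (limit_free (fun _ => b) I01 x x)]. }
  assert (L2 : limit1_in (fun y => / (f y + b)) I01 (/ (f x + b)) x).
  { apply limit_inv; [exact L1|]. specialize (Hp x Hx). lra. }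
  assert (L3 : limit1_in (fun y => f y * / (f y + b)) I01 (f x * / (f x + b)) x).
  { apply limit_mul; assumption. }
  assert (L4 : limit1_in (fun y => a * (1 - y)) I01 (a * (1 - x)) x).
  { apply limit_mul; [exact (limit_free (fun _ => a) I01 x x)|].
    apply limit_minus; [exact (limit_free (fun _ => 1) I01 x x)| apply lim_id]. }
  assert (L5 := limit_mul _ _ _ _ _ _ L4 L3).
  assert (L6 := limit_minus _ _ _ _ _ _ (limit_free (fun _ => 1) I01 x x) L5).
  exact L6.
Qed.

Lemma f1_nonpos f f1 x : (forall x y, I01 x -> I01 y -> x <= y -> f y <= f x) ->
  derivable_pt_lim f x (f1 x) -> 0 < x < 1 -> f1 x <= 0.
Proof.
  intros Hdec Hd Hx.
  destruct (Rle_or_lt (f1 x) 0) as [H|H]; [exact H|exfalso].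
  destruct (Hd (f1 x) H) as [[d Hd0] Hy]. simpl in Hy.
  set (h := Rmin (d/2) ((1-x)/2)).
  assert (hp : 0 < h) by (apply Rmin_glb_lt; lra).
  assert (h1 := Rmin_l (d/2) ((1-x)/2)). assert (h2 := Rmin_r (d/2) ((1-x)/2)).
  fold h in h1, h2.
  specialize (Hy h ltac:(lra) ltac:(rewrite Rabs_right; lra)).
  assert (Hf : f (x + h) <= f x) by (apply Hdec; unfold I01; lra).
  assert (Hq : (f (x + h) - f x) / h <= 0).
  { unfold Rdiv. assert (0 < / h) by (apply Rinv_0_lt_compat; lra). nra. }
  apply Rabs_def2 in Hy. lra.
Qed.

Lemma d_val (g : R -> R) x d d' : is_derive g x d -> d = d' -> is_derive g x d'.
Proof. intros H E; subst; exact H. Qed.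

Lemma d_plus_const g x d c : is_derive g x d -> is_derive (fun y => g y + c) x d.
Proof.
  intros H. replace d with (plus d zero) by (rewrite plus_zero_r; auto).
  apply (is_derive_plus g (fun _ => c)); [exact H| apply is_derive_const].
Qed.

Lemma d_k f f1 f2 b x : is_derive f x (f1 x) -> is_derive f1 x (f2 x) -> f x + b <> 0 ->
  is_derive (fun y => f1 y / (f y + b) ^ 2) x
   ((f2 x * (f x + b) ^ 2 - f1 x * (2 * f1 x * (f x + b))) / ((f x + b) ^ 2) ^ 2).
Proof.
  intros H1 H2 Hn.
  assert (Hp := is_derive_pow _ 2 _ _ (d_plus_const _ _ _ b H1)).
  assert (Hd := is_derive_div _ _ _ _ _ H2 Hp ltac:(apply pow_nonzero; exact Hn)).
  eapply d_val; [exact Hd|]. simpl. field. exact Hn.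
Qed.

Lemma d_mult (u v : R -> R) x du dv : is_derive u x du -> is_derive v x dv ->
  is_derive (fun y => u y * v y) x (du * v x + u x * dv).
Proof.
  intros H1 H2. apply is_derive_Reals. apply is_derive_Reals in H1, H2.
  exact (derivable_pt_lim_mult u v x du dv H1 H2).
Qed.

Lemma d_minus (u v : R -> R) x du dv : is_derive u x du -> is_derive v x dv ->
  is_derive (fun y => u y - v y) x (du - dv).
Proof.
  intros H1 H2. apply is_derive_Reals. apply is_derive_Reals in H1, H2.
  exact (derivable_pt_lim_minus u v x du dv H1 H2).
Qed.

Lemma d_const (c x : R) : is_derive (fun _ => c) x 0.
Proof. apply is_derive_Reals. apply (derivable_pt_lim_const c). Qed.

Lemma d_id (x : R) : is_derive (fun y => y) x 1.
Proof. apply is_derive_Reals. apply derivable_pt_lim_id. Qed.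

Lemma d_T f f1 a b x : is_derive f x (f1 x) -> f x + b <> 0 ->
  is_derive (fun x => 1 - a * (1 - x) * (f x / (f x + b))) x
    (a * (f x / (f x + b)) - a * (1 - x) * (b * (f1 x / (f x + b) ^ 2))).
Proof.
  intros H1 Hn.
  assert (Hg := is_derive_div _ _ _ _ _ H1 (d_plus_const _ _ _ b H1) Hn).
  assert (Hl := d_mult _ _ x _ _ (d_const a x) (d_minus _ _ x _ _ (d_const 1 x) (d_id x))).
  assert (Hm := d_mult _ _ _ _ _ Hl Hg).
  assert (Hs := d_minus _ _ _ _ _ (d_const 1 x) Hm).
  eapply d_val; [exact Hs|]. simpl. field. exact Hn.
Qed.

Lemma interior_concave (T tp : R -> R) :
  (forall x, 0 < x < 1 -> derivable_pt_lim T x (tp x)) ->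
  (forall x y, 0 < x -> x < y -> y < 1 -> tp y <= tp x) ->
  forall x y l, 0 < x < 1 -> 0 < y < 1 -> 0 <= l <= 1 ->
    l * T x + (1 - l) * T y <= T (l * x + (1 - l) * y).
Proof.
  intros HD HM.
  assert (K : forall x y l, 0 < x -> x < y -> y < 1 -> 0 < l < 1 ->
     l * T x + (1 - l) * T y <= T (l * x + (1 - l) * y)).
  { intros x y l Hx Hxy Hy Hl.
    set (z := l * x + (1 - l) * y).
    assert (Hz1 : x < z) by (unfold z; nra).
    assert (Hz2 : z < y) by (unfold z; nra).
    destruct (MVT_cor2 T tp x z Hz1 ltac:(intros c Hc; apply HD; lra)) as [c1 [E1 H1]].
    destruct (MVT_cor2 T tp z y Hz2 ltac:(intros c Hc; apply HD; lra)) as [c2 [E2 H2]].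
    assert (Hm : tp c2 <= tp c1) by (apply HM; lra).
    assert (Ez1 : z - x = (1 - l) * (y - x)) by (unfold z; ring).
    assert (Ez2 : y - z = l * (y - x)) by (unfold z; ring).
    rewrite Ez1 in E1. rewrite Ez2 in E2.
    assert (P : 0 <= l * (1 - l) * (y - x)) by (apply Rmult_le_pos; nra).
    assert (l * T x + (1 - l) * T y - T z = l * (1 - l) * (y - x) * (tp c2 - tp c1)).
    { replace (l * T x + (1 - l) * T y - T z) with (- l * (T z - T x) + (1 - l) * (T y - T z)) by ring.
      rewrite E1, E2. ring. }
    nra. }
  intros x y l Hx Hy Hl.
  destruct (Req_dec l 0) as [E|E].
  { subst. replace (0 * x + (1 - 0) * y) with y by ring. lra. }
  destruct (Req_dec l 1) as [E'|E'].
  { subst. replace (1 * x + (1 - 1) * y) with x by ring. lra. }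
  destruct (Rtotal_order x y) as [H|[H|H]].
  - apply K; lra.
  - subst. replace (l * y + (1 - l) * y) with y by ring. lra.
  - pose proof (K y x (1 - l) ltac:(lra) H ltac:(lra) ltac:(lra)) as R.
    replace (1 - (1 - l)) with l in R by ring.
    replace ((1 - l) * y + l * x) with (l * x + (1 - l) * y) in R by ring. lra.
Qed.

Lemma extend (T : R -> R) :
  (forall x y l, 0 < x < 1 -> 0 < y < 1 -> 0 <= l <= 1 ->
    l * T x + (1 - l) * T y <= T (l * x + (1 - l) * y)) ->
  (forall x, I01 x -> continuous_within I01 T x) -> concave_on I01 T.
Proof.
  intros HI HC x y l Hx Hy Hl. unfold I01 in *.
  set (z := l * x + (1 - l) * y).
  assert (Hz : I01 z) by (unfold I01, z; nra).
  destruct (Rle_or_lt (l * T x + (1 - l) * T y) (T z)) as [H|H]; [exact H|exfalso].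
  set (dl := l * T x + (1 - l) * T y - T z).
  assert (Hdl : 0 < dl / 3) by (unfold dl; lra).
  destruct (HC x Hx _ Hdl) as [d1 [Hd1 C1]].
  destruct (HC y Hy _ Hdl) as [d2 [Hd2 C2]].
  destruct (HC z Hz _ Hdl) as [d3 [Hd3 C3]].
  set (e := Rmin (1/2) (Rmin d1 (Rmin d2 d3))).
  assert (e1 := Rmin_l (1/2) (Rmin d1 (Rmin d2 d3))).
  assert (e2 := Rmin_r (1/2) (Rmin d1 (Rmin d2 d3))).
  assert (e3 := Rmin_l d1 (Rmin d2 d3)). assert (e4 := Rmin_r d1 (Rmin d2 d3)).
  assert (e5 := Rmin_l d2 d3). assert (e6 := Rmin_r d2 d3).
  fold e in e1, e2.
  assert (ep : 0 < e) by (unfold e; repeat apply Rmin_glb_lt; lra).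
  set (phi := fun s => (1 - e) * s + e / 2).
  assert (Pin : forall s, 0 <= s <= 1 -> 0 < phi s < 1) by (intros s Hs; unfold phi; nra).
  assert (Pd : forall s, 0 <= s <= 1 -> Rabs (phi s - s) < e).
  { intros s Hs. unfold phi. apply Rabs_def1; nra. }
  assert (Pz : l * phi x + (1 - l) * phi y = phi z) by (unfold phi, z; ring).
  pose proof (HI (phi x) (phi y) l (Pin x Hx) (Pin y Hy) Hl) as HH. rewrite Pz in HH.
  pose proof (C1 (phi x) ltac:(unfold I01; pose proof (Pin x Hx); lra) ltac:(pose proof (Pd x Hx); lra)) as A1.
  pose proof (C2 (phi y) ltac:(unfold I01; pose proof (Pin y Hy); lra) ltac:(pose proof (Pd y Hy); lra)) as A2.
  pose proof (C3 (phi z) ltac:(unfold I01; pose proof (Pin z Hz); lra) ltac:(pose proof (Pd z Hz); lra)) as A3.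
  apply Rabs_def2 in A1. apply Rabs_def2 in A2. apply Rabs_def2 in A3.
  assert (l * (T x - T (phi x)) <= l * (dl / 3)) by (apply Rmult_le_compat_l; lra).
  assert ((1 - l) * (T y - T (phi y)) <= (1 - l) * (dl / 3)) by (apply Rmult_le_compat_l; lra).
  unfold dl in *. lra.
Qed.

Theorem proposition2 (f f1 f2 : R -> R) (a b : R) :
  (forall x, I01 x -> 0 < f x) ->
  (forall x y, I01 x -> I01 y -> x <= y -> f y <= f x) ->
  (forall x, I01 x -> has_deriv_within I01 f f1 x) ->
  (forall x, I01 x -> has_deriv_within I01 f1 f2 x) ->
  (forall x, I01 x -> continuous_within I01 f1 x) ->
  (forall x, I01 x -> continuous_within I01 f2 x) ->
  0 < a -> 0 < b ->
  (forall x, I01 x -> f2 x * (f x + b) >= 2 * (f1 x) ^ 2) ->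
  concave_on I01 (fun x => 1 - a * (1 - x) * (f x / (f x + b))).
Proof.
  intros Hp Hdec Hf Hf1 _ _ Ha Hb Hineq.
  apply extend; [|intros x Hx; apply (T_cont f f1); auto].
  assert (Df : forall x, 0 < x < 1 -> is_derive f x (f1 x)).
  { intros x Hx. apply is_derive_Reals. apply deriv_int; [apply Hf; unfold I01|]; lra. }
  assert (Df1 : forall x, 0 < x < 1 -> is_derive f1 x (f2 x)).
  { intros x Hx. apply is_derive_Reals. apply deriv_int; [apply Hf1; unfold I01|]; lra. }
  assert (Hpos : forall x, 0 < x < 1 -> 0 < f x) by (intros; apply Hp; unfold I01; lra).
  assert (Hn : forall x, 0 < x < 1 -> f x + b <> 0) by (intros x Hx; specialize (Hpos x Hx); lra).
  apply (interior_concave (fun x => 1 - a * (1 - x) * (f x / (f x + b))) (fun x => a * (f x / (f x + b)) - a * (1 - x) * (b * (f1 x / (f x + b) ^ 2)))).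
  - intros x Hx. apply is_derive_Reals. apply d_T; auto.
  - intros x y Hx Hxy Hy.
    assert (Hx' : 0 < x < 1) by lra. assert (Hy' : 0 < y < 1) by lra.
    assert (Hfy : f y <= f x) by (apply Hdec; unfold I01; lra).
    pose proof (Hpos x Hx') as px. pose proof (Hpos y Hy') as py.
    assert (G : f y / (f y + b) <= f x / (f x + b)).
    { assert (E : f x / (f x + b) - f y / (f y + b) = b * (f x - f y) / ((f x + b) * (f y + b)))
        by (field; lra).
      assert (0 <= b * (f x - f y) / ((f x + b) * (f y + b))).
      { apply Rdiv_le_0_compat; nra. }
      lra. }
    assert (Kk : f1 x / (f x + b) ^ 2 <= f1 y / (f y + b) ^ 2).
    { destruct (MVT_cor2 (fun y => f1 y / (f y + b) ^ 2)
        (fun x => (f2 x * (f x + b) ^ 2 - f1 x * (2 * f1 x * (f x + b))) / ((f x + b) ^ 2) ^ 2)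
        x y Hxy) as [c [E Hc]].
      { intros c Hc. apply is_derive_Reals. apply d_k; [apply Df|apply Df1|apply Hn]; lra. }
      assert (Hc' : 0 < c < 1) by lra.
      pose proof (Hpos c Hc') as pc.
      pose proof (Hineq c ltac:(unfold I01; lra)) as Ic.
      assert (0 <= (f2 c * (f c + b) ^ 2 - f1 c * (2 * f1 c * (f c + b))) / ((f c + b) ^ 2) ^ 2).
      { apply Rdiv_le_0_compat; [|apply pow_lt; apply pow_lt; lra].
        replace (f2 c * (f c + b) ^ 2 - f1 c * (2 * f1 c * (f c + b)))
          with ((f c + b) * (f2 c * (f c + b) - 2 * f1 c ^ 2)) by ring.
        apply Rmult_le_pos; lra. }
      nra. }
    assert (Ky : f1 y / (f y + b) ^ 2 <= 0).
    { pose proof (f1_nonpos f f1 y Hdec ltac:(apply is_derive_Reals; apply Df; lra) Hy').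
      unfold Rdiv. assert (0 < / (f y + b) ^ 2) by (apply Rinv_0_lt_compat; apply pow_lt; lra).
      nra. }
    set (kx := f1 x / (f x + b) ^ 2) in *. set (ky := f1 y / (f y + b) ^ 2) in *.
    assert (Q : (1 - x) * kx <= (1 - y) * ky) by nra.
    assert (0 <= a * b * ((1 - y) * ky - (1 - x) * kx)) by (apply Rmult_le_pos; nra).
    assert (0 <= a * (f x / (f x + b) - f y / (f y + b))) by (apply Rmult_le_pos; lra).
    nra.
Qed.
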